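(* Fix integers $h_1,h_2$ with $p\nmid h_1h_2$ and let $e_1,e_2\in\{-1,1\}$. Assume $k_1,k_2>0$ and $k_1+k_2<d$. Let $\alpha_1\in\mathbb{F}_{q^{k_1}}$, $\alpha_2\in\mathbb{F}_{q^{k_2}}$ have monic minimal polynomials $g_1,g_2$ over $\mathbb{F}_q$ of degrees $u_1,u_2$. Then \[\left\langle\psi(e_1h_1\mathrm{tr}_{k_1}f(\alpha_1)+e_2h_2\mathrm{tr}_{k_2}f(\alpha_2))\right\rangle=1\] if either ($g_1=g_2$, $p\mid\frac{e_1h_1k_1+e_2h_2k_2}{u_1}$ and $p\nmid\frac{k_1k_2}{u_1u_2}$) or ($p$ divides both $\frac{k_1}{u_1}$ and $\frac{k_2}{u_2}$); otherwise the average equals $0$.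
   Context: $p$ odd prime, $q$ a power of $p$, $d$ a positive integer not divisible by $p$. $\mathrm{tr}_n:\mathbb{F}_{q^n}\to\mathbb{F}_p$ is the absolute trace; $\psi$ a fixed nontrivial additive character of $\mathbb{F}_p$. $\mathcal{F}_d'=\{a_dX^d+\dots+a_0\in\mathbb{F}_q[X]:a_d\ne0,\ a_{pk}=0\text{ for }1\le k\le\lfloor d/p\rfloor\}$ and $\langle\phi(f)\rangle=|\mathcal{F}_d'|^{-1}\sum_{f\in\mathcal{F}_d'}\phi(f)$. *)

(* Defs.v *)
From HB Require Import structures.
From mathcomp Require Import all_boot all_order all_algebra all_field.
Set Implicit Arguments. Unset Strict Implicit. Unset Printing Implicit Defensive.
Import Order.TTheory GRing.Theory Num.Theory.
Local Open Scope ring_scope.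

(* Everything lives inside a finite field L of characteristic p that contains
   F_q, F_{q^k1}, F_{q^k2}; q = p^m.  F_{q^k} is realised as the subfield
   {x in L | x^(q^k) = x}. *)

Definition polyOverFq (L : fieldType) (q : nat) (g : {poly L}) : bool :=
  all (fun c : L => c ^+ q == c) g.

Definition is_minpoly_Fq (L : fieldType) (q : nat) (a : L) (g : {poly L}) : Prop :=
  [/\ g \is monic, polyOverFq q g, root g a &
      forall h : {poly L}, h != 0 -> polyOverFq q h -> root h a ->
        (size g <= size h)%N].

Definition abs_trace (L : nzRingType) (p m n : nat) (x : L) : L :=
  \sum_(i < m * n) x ^+ (p ^ i).

(* F_d' : coefficient vectors (a_0,...,a_d) over F_q with a_d != 0 and
   a_{pk} = 0 for 1 <= k <= d/p (i.e. for every index i <= d with p | i, i > 0) *)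
Definition Fdprime (L : finFieldType) (p q d : nat) : {set {ffun 'I_d.+1 -> L}} :=
  [set a : {ffun 'I_d.+1 -> L} |
     [&& [forall i, a i ^+ q == a i],
         a ord_max != 0 &
         [forall i : 'I_d.+1, ((0 < i)%N && (p %| i)%N) ==> (a i == 0)]]].

Definition polyOf (L : nzRingType) (d : nat) (a : {ffun 'I_d.+1 -> L}) : {poly L} :=
  \poly_(i < d.+1) a (inord i).

Definition avgFd (L : finFieldType) (p q d : nat)
    (phi : {ffun 'I_d.+1 -> L} -> algC) : algC :=
  (#|@Fdprime L p q d|%:R)^-1 * \sum_(a in @Fdprime L p q d) phi a.

(* Main.v *)
Require Import Defs.
From HB Require Import structures.
From mathcomp Require Import all_boot all_order all_algebra all_field.
From mathcomp Require Import zify ring lra.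
Import Order.TTheory GRing.Theory Num.Theory.
Local Open Scope ring_scope.
Set Implicit Arguments. Unset Strict Implicit. Unset Printing Implicit Defensive.
Import Order.TTheory GRing.Theory Num.Theory.
Local Open Scope ring_scope.

Lemma shift_sum (T : finType) (A : {pred T}) (h : T -> T) (F G : T -> algC) :
  injective h -> (forall a, (h a \in A) = (a \in A)) ->
  (forall a, a \in A -> F (h a) = G a) -> \sum_(a in A) F a = \sum_(a in A) G a.
Proof.
move=> hinj hA hFG; rewrite (reindex_inj hinj) /=.
by apply: eq_big => [a|a ha]; [exact: hA | apply: hFG; rewrite -hA].
Qed.

Section Frob.
Variables (R : comNzRingType) (p : nat) (pchp : p \in [pchar R]).

Definition frn (_ : p \in [pchar R]) (n : nat) (x : R) := x ^+ (p ^ n)%N.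

Lemma frn_nat n : [pchar R].-nat (p ^ n)%N.
Proof.
rewrite pnatX; apply/orP; left.
by rewrite pnatE ?(pcharf_prime pchp).
Qed.

Lemma frnD n x y : frn pchp n (x + y) = frn pchp n x + frn pchp n y.
Proof. exact: exprDn_pchar (frn_nat n). Qed.

Lemma frn0 n : frn pchp n 0 = 0.
Proof. by rewrite /frn expr0n expn_eq0 eqn0Ngt (prime_gt0 (pcharf_prime pchp)). Qed.

Lemma frnN n x : frn pchp n (- x) = - frn pchp n x.
Proof. by apply/eqP; rewrite -addr_eq0 -frnD addNr frn0. Qed.

Lemma frn_is_zmod n : zmod_morphism (frn pchp n).
Proof. by move=> x y; rewrite frnD frnN. Qed.

Lemma frn_is_monoid n : monoid_morphism (frn pchp n).
Proof. by split=> [|x y]; rewrite /frn ?expr1n ?exprMn. Qed.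

HB.instance Definition _ n := GRing.isZmodMorphism.Build R R (frn pchp n) (frn_is_zmod n).
HB.instance Definition _ n := GRing.isMonoidMorphism.Build R R (frn pchp n) (frn_is_monoid n).

End Frob.

Section Orbit.
Variables (L : finFieldType) (p m n0 : nat) (pchp : p \in [pchar L]).
Hypotheses (hm : (0 < m)%N) (hn0 : (0 < n0)%N).
Local Notation q := (p ^ m)%N.
Hypothesis hall : forall x : L, x ^+ (q ^ n0) = x.
Hypothesis hcard : #|L| = (q ^ n0)%N.

Lemma pgt1 : (1 < p)%N. Proof. exact: prime_gt1 (pcharf_prime pchp). Qed.
Lemma qgt1 : (1 < q)%N.
Proof. by rewrite -{1}(expn0 p) ltn_exp2l ?pgt1. Qed.

Lemma exprqq (x : L) i j : (x ^+ (q ^ i)) ^+ (q ^ j) = x ^+ (q ^ (i + j)).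
Proof. by rewrite -exprM -expnD. Qed.

Lemma fix_mul (a : L) r s : a ^+ (q ^ r) = a -> a ^+ (q ^ (s * r)) = a.
Proof.
move=> ha; elim: s => [|s IH]; first by rewrite mul0n expn0 expr1.
by rewrite mulSn -exprqq ha IH.
Qed.

Lemma exP (a : L) : exists n, (0 < n)%N && (a ^+ (q ^ n) == a).
Proof. by exists n0; rewrite hn0 hall eqxx. Qed.

Definition per (a : L) : nat := ex_minn (exP a).

Lemma per_spec a : [/\ (0 < per a)%N, a ^+ (q ^ per a) = a &
   forall n, (0 < n)%N -> a ^+ (q ^ n) = a -> (per a <= n)%N].
Proof.
rewrite /per; case: ex_minnP => r /andP[r0 /eqP ra] rmin; split => //.
by move=> n n0' na; apply: rmin; rewrite n0' na eqxx.
Qed.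

Lemma per_gt0 a : (0 < per a)%N. Proof. by case: (per_spec a). Qed.
Lemma per_fix a : a ^+ (q ^ per a) = a. Proof. by case: (per_spec a). Qed.
Lemma per_min a n : (0 < n)%N -> a ^+ (q ^ n) = a -> (per a <= n)%N.
Proof. by case: (per_spec a) => _ _; apply. Qed.

Lemma fix_mod a i : a ^+ (q ^ i) = a ^+ (q ^ (i %% per a)).
Proof.
rewrite {1}(divn_eq i (per a)) -exprqq.
by rewrite (fix_mul _ (per_fix a)).
Qed.

Lemma per_dvd a k : a ^+ (q ^ k) = a -> (per a %| k)%N.
Proof.
move=> ha; rewrite /dvdn; apply/eqP; apply/contraTeq: isT => nz.
have lt := ltn_pmod k (per_gt0 a).
have := @per_min a (k %% per a); rewrite lt0n nz => /(_ isT).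
by rewrite -fix_mod ha => /(_ erefl); rewrite leqNgt lt.
Qed.

Lemma per_le a k : (0 < k)%N -> a ^+ (q ^ k) = a -> (per a <= k)%N.
Proof. by move=> k0 ha; apply: dvdn_leq => //; apply: per_dvd. Qed.

Definition Orb (a : L) : {set L} := [set a ^+ (q ^ i) | i : 'I_(per a)].

Lemma orbP a x : reflect (exists i, x = a ^+ (q ^ i)) (x \in Orb a).
Proof.
apply: (iffP imsetP) => [[i _ ->]|[i ->]]; first by exists i.
exists (Ordinal (ltn_pmod i (per_gt0 a))) => //.
by rewrite fix_mod.
Qed.

Lemma orb_self a : a \in Orb a.
Proof. by apply/orbP; exists 0%N; rewrite expn0 expr1. Qed.

Lemma orb_inj a : injective (fun i : 'I_(per a) => a ^+ (q ^ i)).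
Proof.
have key : forall i j : 'I_(per a), (i < j)%N -> a ^+ (q ^ i) = a ^+ (q ^ j) -> False.
  move=> i j lij e.
  have : a ^+ (q ^ (i + (per a - j))) = a.
    by rewrite -exprqq e exprqq subnKC ?per_fix // ltnW.
  move/(@per_min a (i + (per a - j))).
  have jl := ltn_ord j.
  have -> : (0 < i + (per a - j))%N by rewrite addn_gt0 subn_gt0 jl orbT.
  move/(_ isT); apply/negP; rewrite -ltnNge.
  lia.
move=> i j e; case: (ltngtP i j) => lij.
- by case: (key _ _ lij e).
- by case: (key _ _ lij (esym e)).
- exact: val_inj.
Qed.

Lemma card_orb a : #|Orb a| = per a.
Proof. by rewrite card_imset ?card_ord //; apply: orb_inj. Qed.

Lemma orb_sub a b : b \in Orb a -> {subset Orb b <= Orb a}.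
Proof.
case/orbP=> t -> x /orbP[i ->]; apply/orbP; exists (t + i)%N.
by rewrite exprqq.
Qed.

Lemma orb_sym a b : b \in Orb a -> Orb b = Orb a.
Proof.
move=> hb; apply/setP/subset_eqP/andP; split; apply/subsetP; first exact: orb_sub.
apply: orb_sub; case/orbP: hb => t ->; apply/orbP.
exists (per a * t - t)%N; rewrite exprqq subnKC; last by rewrite leq_pmull ?per_gt0.
by rewrite mulnC fix_mul // per_fix.
Qed.

Lemma orb0 : Orb 0 = [set 0].
Proof.
apply/setP => x; rewrite inE; apply/orbP/eqP => [[i ->]|->].
  by rewrite expr0n expn_eq0 eqn0Ngt (ltnW qgt1).
by exists 0%N; rewrite expn0 expr1.
Qed.

Lemma orb_nz a x : a != 0 -> x \in Orb a -> x != 0.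
Proof. by move=> a0 /orbP[i ->]; rewrite expf_neq0. Qed.

Lemma per0 : per 0 = 1%N.
Proof. by rewrite -card_orb orb0 cards1. Qed.

Lemma orb_frob a x : x \in Orb a -> x ^+ q \in Orb a.
Proof.
case/orbP => i ->; apply/orbP; exists i.+1.
by rewrite -exprM -expnSr.
Qed.

Lemma orb_sum a k (F : L -> L) : a ^+ (q ^ k) = a ->
  \sum_(i < k) F (a ^+ (q ^ i)) = (k %/ per a)%:R * \sum_(x in Orb a) F x.
Proof.
move=> ha; have dv := per_dvd ha.
have -> : \sum_(x in Orb a) F x = \sum_(i < per a) F (a ^+ (q ^ i)).
  rewrite big_imset /=; last by move=> i j _ _; apply: orb_inj.
  by [].
rewrite mulr_natl -[(k %/ per a)%N]subn0 -sumr_const_nat.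
rewrite -(big_mkord xpredT (fun i => F (a ^+ (q ^ i)))) -{1}(divnK dv) big_nat_mul.
apply: eq_bigr => l _.

rewrite -{1}(add0n (l * per a)%N) big_addn mulSn addnK.
rewrite -(big_mkord xpredT (fun i => F (a ^+ (q ^ i)))).
apply: eq_bigr => i _; congr F.
by rewrite addnC -exprqq (fix_mul _ (per_fix a)).
Qed.


Local Notation fr := (frn pchp).

Lemma frE n x : fr n x = x ^+ (p ^ n)%N. Proof. by []. Qed.

Lemma fixq_iter (x : L) : x ^+ q = x -> forall l, x ^+ (q ^ l) = x.
Proof.
move=> hx; elim=> [|l IH]; first by rewrite expn0 expr1.
by rewrite expnSr exprM IH hx.
Qed.

Lemma overFq_coef (g : {poly L}) : polyOverFq q g -> forall i, g`_i ^+ q = g`_i.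
Proof.
move=> /allP hg i; case: (ltnP i (size g)) => hi.
  by apply/eqP; apply: hg; rewrite mem_nth.
by rewrite nth_default // expr0n eqn0Ngt (ltnW qgt1).
Qed.

Lemma coef_overFq (g : {poly L}) : (forall i, g`_i ^+ q = g`_i) -> polyOverFq q g.
Proof.
move=> hg; apply/allP => c hc; rewrite -(nth_index 0 hc); apply/eqP; exact: hg.
Qed.

Lemma map_fix (g : {poly L}) : polyOverFq q g -> map_poly (fr m) g = g.
Proof. by move=> hg; apply/polyP => i; rewrite coef_map /= frE overFq_coef. Qed.

Lemma over_root (g : {poly L}) x : polyOverFq q g -> root g x -> root g (x ^+ q).
Proof.
move=> hg /eqP hx; apply/eqP.
have := horner_map (fr m) g x; rewrite map_fix // => ->.
by rewrite hx rmorph0.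
Qed.

Lemma root_orb (g : {poly L}) a x : polyOverFq q g -> root g a -> x \in Orb a -> root g x.
Proof.
move=> hg ha /orbP[i ->]; elim: i => [|i IH]; first by rewrite expn0 expr1.
by rewrite expnSr exprM; apply: over_root.
Qed.

Definition Pol (a : L) : {poly L} := \prod_(x in Orb a) ('X - x%:P).

Lemma PolE a : Pol a = \prod_(x <- enum (Orb a)) ('X - x%:P).
Proof. by rewrite /Pol big_enum. Qed.

Lemma Pol_monic a : Pol a \is monic.
Proof. exact: monic_prod_XsubC. Qed.

Lemma size_Pol a : size (Pol a) = (per a).+1.
Proof. by rewrite PolE size_prod_XsubC -cardE card_orb. Qed.

Lemma root_Pol a x : root (Pol a) x = (x \in Orb a).
Proof. by rewrite PolE root_prod_XsubC mem_enum. Qed.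

Lemma frob_orb a : fr m @: Orb a = Orb a.
Proof.
apply/eqP; rewrite eqEcard (card_imset _ (fmorph_inj (fr m))) leqnn andbT; apply/subsetP => y /imsetP[x hx ->].
by rewrite frE; apply: orb_frob.
Qed.

Lemma Pol_over a : polyOverFq q (Pol a).
Proof.
apply: coef_overFq => i.
have : map_poly (fr m) (Pol a) = Pol a.
  rewrite /Pol rmorph_prod.
  under eq_bigr => x _ do rewrite /= map_polyXsubC.
  by rewrite -[in RHS]frob_orb [RHS](big_imset _ (in2W (fmorph_inj (fr m)))).
move=> e; have := congr1 (fun g : {poly L} => g`_i) e.
by rewrite coef_map /= frE.
Qed.

Lemma minpoly_Pol (g : {poly L}) a : is_minpoly_Fq q a g -> g = Pol a.
Proof.
case=> gmon gover groot gmin.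
have gnz : g != 0 by apply: monic_neq0.
have allr : all (root g) (enum (Orb a)).
  by apply/allP => x; rewrite mem_enum; apply: root_orb.
have hs1 : (size (Pol a) <= size g)%N.
  rewrite size_Pol -card_orb cardE.
  by apply: max_poly_roots => //; apply: enum_uniq.
have hs2 : (size g <= size (Pol a))%N.
  apply: gmin; first exact: monic_neq0 (Pol_monic a).
    exact: Pol_over.
  by rewrite root_Pol orb_self.
have hs : size g = (size (enum (Orb a))).+1.
  by rewrite -cardE card_orb -size_Pol; apply/eqP; rewrite eqn_leq hs1 hs2.
rewrite (all_roots_prod_XsubC hs allr); last by rewrite uniq_rootsE enum_uniq.
by rewrite (monicP gmon) scale1r PolE.
Qed.

Lemma Pol_eq a b : (Pol a == Pol b) = (Orb a == Orb b).
Proof.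
apply/eqP/eqP => [e|e]; last by rewrite /Pol e.
apply: esym; apply: orb_sym.
by rewrite -root_Pol e root_Pol orb_self.
Qed.

Lemma orb_disj a b x : Orb a != Orb b -> x \in Orb a -> x \in Orb b -> False.
Proof.
move=> /eqP ne ha hb; apply: ne.
by rewrite -(orb_sym ha) (orb_sym hb).
Qed.


Lemma frfr a b x : fr a (fr b x) = fr (b + a) x.
Proof. by rewrite !frE -exprM -expnD. Qed.

Lemma frq x : fr m x = x ^+ q. Proof. by []. Qed.

Lemma frq_iter l x : fr (m * l) x = x ^+ (q ^ l).
Proof. by rewrite frE expnM. Qed.

Lemma sum_shift n (f : nat -> L) : f n = f 0%N ->
  \sum_(i < n) f i.+1 = \sum_(i < n) f i.
Proof.
case: n => [|n] e; first by rewrite !big_ord0.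
by rewrite big_ord_recr big_ord_recl /= e addrC.
Qed.

Lemma fixp_iter (x : L) : x ^+ p = x -> forall l, fr l x = x.
Proof.
move=> hx; elim=> [|l IH]; first by rewrite frE expn0 expr1.
by rewrite frE expnSr exprM -frE IH hx.
Qed.

Definition Trm (z : L) := \sum_(i < m) fr i z.

Lemma TrmD x y : Trm (x + y) = Trm x + Trm y.
Proof. by rewrite /Trm -big_split; apply: eq_bigr => i _; rewrite rmorphD. Qed.

Lemma Trm0 : Trm 0 = 0.
Proof. by rewrite /Trm big1 // => i _; rewrite rmorph0. Qed.

Lemma TrmMz x z : Trm (x *~ z) = Trm x *~ z.
Proof. by rewrite /Trm mulrz_suml; apply: eq_bigr => i _; rewrite rmorphMz. Qed.

Lemma Trm_scal s y : s ^+ p = s -> Trm (s * y) = s * Trm y.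
Proof.
move=> hs; rewrite /Trm mulr_sumr; apply: eq_bigr => i _.
by rewrite rmorphM /= (fixp_iter hs).
Qed.

Lemma Trm_Fp y : y ^+ q = y -> Trm y ^+ p = Trm y.
Proof.
move=> hy; have -> : Trm y ^+ p = fr 1 (Trm y) by rewrite frE expn1.
rewrite /Trm rmorph_sum /=.
under eq_bigr do rewrite frfr addn1.
by rewrite (@sum_shift m (fun i => fr i y)) // frq hy frE expn0 expr1.
Qed.

Definition Sk k (y : L) := \sum_(l < k) fr (m * l) y.

Lemma Sk_F k y : y ^+ (q ^ k) = y -> Sk k y ^+ q = Sk k y.
Proof.
move=> hy; rewrite -frq /Sk rmorph_sum /=.
under eq_bigr do rewrite frfr -mulnSr.
by rewrite (@sum_shift k (fun i => fr (m * i) y)) // frq_iter hy muln0 frE expn0 expr1.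
Qed.

Lemma SkD k x y : Sk k (x + y) = Sk k x + Sk k y.
Proof. by rewrite /Sk -big_split; apply: eq_bigr => i _; rewrite rmorphD. Qed.

Lemma Sk_scal k x y : x ^+ q = x -> Sk k (x * y) = x * Sk k y.
Proof.
move=> hx; rewrite /Sk mulr_sumr; apply: eq_bigr => i _.
by rewrite rmorphM /= frq_iter (fixq_iter hx).
Qed.

Lemma abs_trace_split k x y : x ^+ q = x ->
  abs_trace p m k (x * y) = Trm (x * Sk k y).
Proof.
move=> hx; rewrite /abs_trace /Trm -Sk_scal // /Sk.
under [RHS]eq_bigr => i _ do rewrite rmorph_sum.
rewrite [RHS]exchange_big /=.
rewrite -(big_mkord xpredT (fun i => (x * y) ^+ (p ^ i)%N)) mulnC big_nat_mul.
rewrite -(big_mkord xpredT (fun l => \sum_(i < m) fr i (fr (m * l) (x * y)))).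
apply: eq_bigr => l _.
rewrite -{1}(add0n (l * m)%N) big_addn mulSn addnK.
rewrite -(big_mkord xpredT (fun i => fr i (fr (m * l) (x * y)))).
by apply: eq_bigr => i _; rewrite frfr frE mulnC addnC.
Qed.


Lemma pchpP : p \in [pchar {poly L}].
Proof. by rewrite pchar_poly. Qed.

Lemma dvd_XqX n : ('X^q - 'X : {poly L}) %| 'X^(q ^ n) - 'X.
Proof.
elim: n => [|n IH]; first by rewrite expn0 expr1 subrr dvdp0.
have -> : ('X^(q ^ n.+1) - 'X : {poly L}) = ('X^(q ^ n) - 'X) ^+ q + ('X^q - 'X).
  have -> : (('X^(q ^ n) - 'X) ^+ q : {poly L}) = frn pchpP m ('X^(q ^ n) - 'X) by [].
  rewrite rmorphB /= /frn -exprM -expnSr.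
  by rewrite addrA subrK.
by apply: dvdp_add => //; apply: dvdp_exp => //; rewrite ltnW // qgt1.
Qed.

Lemma size_XnX n : (1 < n)%N -> size ('X^n - 'X : {poly L}) = n.+1.
Proof.
move=> hn; rewrite size_polyDl size_polyXn // size_polyN size_polyX.
by rewrite ltnS.
Qed.

Lemma card_roots (g : {poly L}) : g != 0 -> (#|[set x | root g x]| < size g)%N.
Proof.
move=> gnz; rewrite cardE; apply: max_poly_roots => //; last exact: enum_uniq.
by apply/allP => x; rewrite mem_enum inE.
Qed.

Lemma cardF : (q <= #|[set x : L | x ^+ q == x]|)%N.
Proof.
set Q := (q ^ n0)%N.
have qQ : (q <= Q)%N by rewrite /Q -{1}(expn1 q) leq_pexp2l ?(ltnW qgt1).
have Q1 : (1 < Q)%N by apply: leq_trans qQ; apply: qgt1.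
set D : {poly L} := 'X^q - 'X.
set B : {poly L} := 'X^Q - 'X.
have dv : D %| B by apply: dvd_XqX.
pose H : {poly L} := B %/ D.
have eB : B = H * D by rewrite /H divpK.
have sD : size D = q.+1 by apply: size_XnX; apply: qgt1.
have sB : size B = Q.+1 by apply: size_XnX.
have Bnz : B != 0 by rewrite -size_poly_eq0 sB.
have Hnz : H != 0 by apply: contraNneq Bnz => e; rewrite eB e mul0r.
have Dnz : D != 0 by rewrite -size_poly_eq0 sD.
have sH : size H = (Q - q).+1.
  have := size_mul Hnz Dnz; rewrite -eB sB sD => e.
  have : (0 < size H)%N by rewrite size_poly_gt0.
  move: e; rewrite addnS /=; move: (size H) qQ => z; clear; lia.
have cH := card_roots Hnz; rewrite sH ltnS in cH.
have sub : [set: L] \subset [set x | root D x] :|: [set x | root H x].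
  apply/subsetP => x _; rewrite !inE.
  have : root B x by rewrite /root /B !hornerE hall subrr.
  by rewrite eB rootM orbC.
have := subset_leq_card sub; rewrite cardsT hcard cardsU => h.
have eqs : [set x | root D x] = [set x : L | x ^+ q == x].
  by apply/setP => x; rewrite !inE /root /D !hornerE subr_eq0.
rewrite eqs in h; move: h; rewrite -/Q.
lia.
Qed.

Definition TrP : {poly L} := \sum_(i < m) 'X^(p ^ i)%N.

Lemma TrP_eval y : TrP.[y] = Trm y.
Proof. by rewrite /TrP horner_sum; apply: eq_bigr => i _; rewrite hornerXn. Qed.

Lemma TrP_nz : TrP != 0.
Proof.
apply/eqP => e; have := congr1 (fun g : {poly L} => g`_1) e.
rewrite coef0 /TrP coef_sum -(prednK hm) big_ord_recl /= coefXn expn0 eqxx.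
rewrite big1 ?addr0; first by move/eqP; rewrite oner_eq0.
move=> i _; rewrite coefXn /=; case: eqP => // e1.
have : (1 < p ^ (i.+1))%N by rewrite -{1}(expn0 p) ltn_exp2l ?pgt1.
by rewrite -e1.
Qed.

Lemma size_TrP : (size TrP <= (p ^ m.-1).+1)%N.
Proof.
apply: leq_trans (size_sum _ _ _) _.
apply/bigmax_leqP => i _; rewrite size_polyXn ltnS leq_pexp2l ?(ltnW pgt1) //.
by rewrite -ltnS prednK.
Qed.

Lemma exists_Trm : exists y, y ^+ q = y /\ Trm y != 0.
Proof.
case: (boolP [exists y, (y ^+ q == y) && (Trm y != 0)]).
  by case/existsP => y /andP[/eqP h1 h2]; exists y.
rewrite negb_exists => /forallP hall'.
have sub : [set x : L | x ^+ q == x] \subset [set x | root TrP x].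
  apply/subsetP => x; rewrite !inE => hx; have := hall' x.
  by rewrite hx /= negbK /root TrP_eval.
have c1 := leq_trans cardF (subset_leq_card sub).
have c2 := leq_trans (leq_ltn_trans c1 (card_roots TrP_nz)) size_TrP.
have : (p ^ m.-1 < q)%N by rewrite ltn_exp2l ?pgt1 // prednK.
by rewrite ltnNge -ltnS c2.
Qed.

Lemma Trm_onto c t : c ^+ q = c -> c != 0 -> t ^+ p = t ->
  exists x, x ^+ q = x /\ Trm (x * c) = t.
Proof.
move=> hc cnz ht; case: exists_Trm => y [hy ty].
have tF : Trm y ^+ p = Trm y by apply: Trm_Fp.
set s := t / Trm y.
have hs : s ^+ p = s by rewrite /s expr_div_n ht tF.
have hsq : s ^+ q = s by rewrite -frq fixp_iter.
exists (s * y / c); split.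
  by rewrite expr_div_n exprMn hsq hy hc.
by rewrite divfK // Trm_scal // /s divfK.
Qed.


Lemma vander (W : L -> L) n :
  leq #|[set x : L | (x != 0) && (W x != 0)]| n ->
  (forall j, (0 < j)%N -> (j <= n)%N -> \sum_x W x * x ^+ j = 0) ->
  forall x, x != 0 -> W x = 0.
Proof.
move=> hS hj x0 x0nz; apply/eqP; apply/negP => /negP W0.
set S := [set x : L | (x != 0) && (W x != 0)] in hS.
have x0S : x0 \in S by rewrite inE x0nz W0.
pose P0 : {poly L} := \prod_(y in S :\ x0) ('X - y%:P).
pose Q : {poly L} := P0 * 'X.
have P0nz : P0 != 0 by apply: monic_neq0; apply: monic_prod_XsubC.
have sQ : (size Q <= n.+1)%N.
  rewrite size_mulX // /P0 -big_enum size_prod_XsubC -cardE ltnS.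
  by rewrite (cardsD1 x0 S) x0S add1n in hS.
have e1 : \sum_x W x * Q.[x] = 0.
  under eq_bigr do rewrite horner_coef mulr_sumr.
  rewrite exchange_big /= big1 // => i _.
  under eq_bigr do rewrite mulrCA.
  rewrite -mulr_sumr; case: (posnP i) => [->|ipos].
    by rewrite coefMX eqxx mul0r.
  by rewrite hj ?mulr0 // -ltnS (leq_trans (ltn_ord i) sQ).
have e2 : \sum_x W x * Q.[x] = W x0 * Q.[x0].
  rewrite (bigD1 x0) //= big1 ?addr0 // => x xne.
  case: (eqVneq x 0) => [->|xnz]; first by rewrite hornerMX mulr0 mulr0.
  case: (eqVneq (W x) 0) => [->|Wnz]; first by rewrite mul0r.
  have xS : x \in S :\ x0 by rewrite !inE xne xnz Wnz.
  have : root P0 x by rewrite /P0 -big_enum root_prod_XsubC mem_enum.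
  by move/eqP; rewrite hornerMX => ->; rewrite mul0r mulr0.
have : W x0 * Q.[x0] != 0.
  rewrite mulf_neq0 // hornerMX mulf_neq0 // /P0 horner_prod.
  rewrite prodf_seq_neq0; apply/allP => y _; apply/implyP; rewrite !inE => /andP[yne _].
  by rewrite hornerXsubC subr_eq0 eq_sym.
by rewrite -e2 e1 eqxx.
Qed.


Lemma Sk_fr1 k y : Sk k (fr 1 y) = fr 1 (Sk k y).
Proof. by rewrite /Sk rmorph_sum; apply: eq_bigr => i _; rewrite /= !frfr addnC. Qed.

Lemma Sk1 k : Sk k 1 = k%:R.
Proof.
by rewrite /Sk (eq_bigr (fun _ => 1)) ?sumr_const ?card_ord // => i _; rewrite rmorph1.
Qed.

Lemma Sk_orb k a j : a ^+ (q ^ k) = a ->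
  Sk k (a ^+ j) = (k %/ per a)%:R * \sum_(x in Orb a) x ^+ j.
Proof.
move=> ha; rewrite /Sk -(orb_sum (fun x => x ^+ j)) //.
by apply: eq_bigr => i _; rewrite frq_iter exprAC.
Qed.

Variables (k1 k2 : nat) (E1 E2 : int) (a1 a2 : L).
Hypotheses (hk1 : (0 < k1)%N) (hk2 : (0 < k2)%N).
Hypotheses (ha1 : a1 ^+ (q ^ k1) = a1) (ha2 : a2 ^+ (q ^ k2) = a2).

Definition cc j := Sk k1 (a1 ^+ j) *~ E1 + Sk k2 (a2 ^+ j) *~ E2.

Lemma ccF j : cc j ^+ q = cc j.
Proof.
rewrite -frq rmorphD !rmorphMz /= !frq !Sk_F //.
  by rewrite exprAC ha2.
by rewrite exprAC ha1.
Qed.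

Lemma cc_frob j : cc (j * p) = fr 1 (cc j).
Proof.
rewrite /cc rmorphD !rmorphMz /= -!Sk_fr1.
by rewrite !frE !expn1 !exprM.
Qed.

Lemma cc0 : cc 0 = k1%:R *~ E1 + k2%:R *~ E2.
Proof. by rewrite /cc !expr0 !Sk1. Qed.

Definition A1 : L := (k1 %/ per a1)%:R *~ E1.
Definition A2 : L := (k2 %/ per a2)%:R *~ E2.
Definition W (x : L) : L :=
  (if x \in Orb a1 then A1 else 0) + (if x \in Orb a2 then A2 else 0).

Lemma ccW j : cc j = \sum_x W x * x ^+ j.
Proof.
rewrite /cc !Sk_orb // /W.
under [RHS]eq_bigr do rewrite mulrDl.
rewrite big_split /= -!mulrzAl -/A1 -/A2; congr (_ + _).
  rewrite big_mkcond mulr_sumr /=.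
  by apply: eq_bigr => x _; case: ifP; rewrite ?mul0r ?mulr0.
rewrite big_mkcond mulr_sumr /=.
by apply: eq_bigr => x _; case: ifP; rewrite ?mul0r ?mulr0.
Qed.

Lemma ZZ_all : (forall x, x != 0 -> W x = 0) -> cc 0 = 0 -> forall j, cc j = 0.
Proof.
move=> hW h0 [|j] //; rewrite ccW big1 // => x _.
by case: (eqVneq x 0) => [->|xnz]; rewrite ?expr0n ?mulr0 // hW // mul0r.
Qed.

Lemma descent j : (0 < j)%N -> cc j != 0 ->
  exists j', [/\ (0 < j')%N, (j' <= j)%N, ~~ (p %| j')%N & cc j' != 0].
Proof.
move: j; elim/ltn_ind => j IH jpos ccnz.
case: (boolP (p %| j)%N) => pj; last by exists j.
have ej : j = (j %/ p * p)%N by rewrite divnK.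
have lt : (j %/ p < j)%N by rewrite ltn_Pdiv ?pgt1.
have pos : (0 < j %/ p)%N by rewrite divn_gt0 ?(ltnW pgt1) // dvdn_leq.
have nz : cc (j %/ p) != 0.
  by apply: contraNneq ccnz => e; rewrite ej cc_frob e rmorph0.
have [j' [h1 h2 h3 h4]] := IH _ lt pos nz.
by exists j'; split => //; apply: leq_trans h2 (ltnW lt).
Qed.



Lemma notZZ d : (k1 + k2 < d)%N -> (exists2 x, x != 0 & W x != 0) ->
  exists j, [/\ (0 < j)%N, (j < d)%N, ~~ (p %| j)%N & cc j != 0].
Proof.
move=> hd [x0 x0nz Wnz].
case: (boolP [exists j : 'I_d, (0 < j)%N && (cc j != 0)]).
  case/existsP => j /andP[jpos ccnz]; have [j' [h1 h2 h3 h4]] := descent jpos ccnz.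
  by exists j'; split => //; exact: leq_ltn_trans h2 (ltn_ord j).
rewrite negb_exists => /forallP hnone.
exfalso; move/eqP: Wnz; apply.
apply: (@vander W d.-1) => //.
  have sub : [set x : L | (x != 0) && (W x != 0)] \subset Orb a1 :|: Orb a2.
    apply/subsetP => x; rewrite !inE => /andP[_]; rewrite /W.
    by case: (x \in Orb a1); case: (x \in Orb a2); rewrite ?addr0 ?eqxx.
  apply: leq_trans (subset_leq_card sub) _.
  rewrite cardsU !card_orb.
  have := per_le hk1 ha1; have := per_le hk2 ha2.
  move: (#|_|) => z; lia.
move=> j jpos jle; rewrite -ccW.
have jd : (j < d)%N by rewrite (leq_ltn_trans jle) // ltn_predL (leq_ltn_trans _ hd).
have := hnone (Ordinal jd); rewrite /= jpos /= negbK => /eqP //.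
Qed.


Lemma dvdz_char (z : int) : (p%:Z %| z)%Z = (z%:~R == 0 :> L).
Proof.
rewrite dvdzE absz_nat; case: z => n /=; first by rewrite (dvdn_pcharf pchp).
by rewrite NegzE rmorphN /= oppr_eq0 (dvdn_pcharf pchp).
Qed.

Lemma F1 (e1 e2 x y : L) : e1 != 0 -> e2 != 0 ->
  ((e1 * x + e2 * y == 0) && (x * y != 0)) || ((x == 0) && (y == 0)) = (e1 * x + e2 * y == 0).
Proof.
move=> h1 h2; case: (eqVneq x 0) => [->|xnz]; case: (eqVneq y 0) => [->|ynz] /=.
- by rewrite !mulr0 addr0 eqxx orbT.
- by rewrite !mulr0 mul0r add0r eqxx !andbF mulf_eq0 (negbTE h2) (negbTE ynz).
- by rewrite !mulr0 addr0 eqxx !andbF mulf_eq0 (negbTE h1) (negbTE xnz).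
- by rewrite mulf_neq0 // andbT ?orbF.
Qed.

Definition Cond : bool :=
  ((Orb a1 == Orb a2)
    && (p%:Z %| (E1 * k1%:Z + E2 * k2%:Z) %/ (per a1)%:Z)%Z
    && ~~ (p %| (k1 * k2) %/ (per a1 * per a2))%N)
  || ((p %| k1 %/ per a1)%N && (p %| k2 %/ per a2)%N).

Hypotheses (hE1 : E1%:~R != 0 :> L) (hE2 : E2%:~R != 0 :> L).

Lemma Cond_iff : Cond = [&& [forall x, (x != 0) ==> (W x == 0)] & cc 0 == 0].
Proof.
have d1 := per_dvd ha1; have d2 := per_dvd ha2.
set r1 := per a1 in d1 *; set r2 := per a2 in d2 *.
set K1 := (k1 %/ r1)%N; set K2 := (k2 %/ r2)%N.
have ek1 : k1 = (K1 * r1)%N by rewrite divnK.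
have ek2 : k2 = (K2 * r2)%N by rewrite divnK.
have r1p : (0 < r1)%N by apply: per_gt0.
have r2p : (0 < r2)%N by apply: per_gt0.
have eA1 : A1 = E1%:~R * K1%:R by rewrite /A1 mulrzl.
have eA2 : A2 = E2%:~R * K2%:R by rewrite /A2 mulrzl.
have ec0 : cc 0 = E1%:~R * K1%:R * r1%:R + E2%:~R * K2%:R * r2%:R.
  by rewrite cc0 -[k1%:R *~ E1]mulrzl -[k2%:R *~ E2]mulrzl -!mulrA -!natrM -ek1 -ek2.
have eKK : ((k1 * k2) %/ (r1 * r2))%N = (K1 * K2)%N.
  by rewrite ek1 ek2 mulnACA mulnK // muln_gt0 r1p r2p.
rewrite /Cond -/r1 -/r2 -/K1 -/K2 eKK !(dvdn_pcharf pchp) natrM.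
case: (eqVneq (Orb a1) (Orb a2)) => eO /=.
- have er : r2 = r1 by rewrite /r1 /r2 -!card_orb eO.
  have ediv : ((E1 * k1%:Z + E2 * k2%:Z) %/ r1%:Z)%Z = E1 * K1%:Z + E2 * K2%:Z.
    by rewrite ek1 ek2 er !PoszM !mulrA -mulrDl mulzK // eqz_nat -lt0n.
  rewrite ediv dvdz_char rmorphD !rmorphM /= F1 //.
  have eW : forall x, W x = if x \in Orb a1 then E1%:~R * K1%:R + E2%:~R * K2%:R else 0.
    by move=> x; rewrite /W eO eA1 eA2; case: ifP; rewrite ?addr0.
  case: (eqVneq a1 0) => [a0|a1nz].
  + have r11 : r1 = 1%N by rewrite /r1 a0 per0.
    rewrite ec0 er r11 !mulr1.
    apply/idP/idP => [/eqP h|/andP[_ /eqP ->] //].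
    rewrite h eqxx andbT; apply/forallP => x; apply/implyP => xnz.
    by rewrite eW h; case: ifP.
  + apply/idP/idP => [/eqP h|/andP[/forallP /(_ a1) /implyP /(_ a1nz)]].
      rewrite ec0 er -mulrDl h mul0r eqxx andbT.
      apply/forallP => x; apply/implyP => xnz.
      by rewrite eW h; case: ifP.
    by rewrite eW orb_self.
- have eW1 : forall x, x \in Orb a1 -> W x = A1.
    intros y hx; rewrite /W hx.
    case: ifP => [hx2|_]; [by case: (orb_disj eO hx hx2) | by rewrite addr0].
  have eW2 : forall x, x \in Orb a2 -> W x = A2.
    intros y hx; rewrite /W hx.
    case: ifP => [hx1|_]; [by case: (orb_disj eO hx1 hx) | by rewrite add0r].
  apply/idP/idP => [/andP[/eqP k10 /eqP k20]|/andP[/forallP hW /eqP c0]].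
    have hA1 : A1 = 0 by rewrite eA1 k10 mulr0.
    have hA2 : A2 = 0 by rewrite eA2 k20 mulr0.
    rewrite ec0 k10 k20 !mulr0 !mul0r addr0 eqxx andbT.
    apply/forallP => x; apply/implyP => _.
    by rewrite /W hA1 hA2; case: ifP; case: ifP; rewrite ?addr0.
  have g1 : a1 != 0 -> K1%:R = 0 :> L.
    move=> a1nz; have := hW a1; rewrite a1nz /= eW1 ?orb_self // eA1 mulf_eq0.
    by rewrite (negbTE hE1) => /eqP.
  have g2 : a2 != 0 -> K2%:R = 0 :> L.
    move=> a2nz; have := hW a2; rewrite a2nz /= eW2 ?orb_self // eA2 mulf_eq0.
    by rewrite (negbTE hE2) => /eqP.
  case: (eqVneq a1 0) => [a10|a1nz]; case: (eqVneq a2 0) => [a20|a2nz].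
  + by move: eO; rewrite a10 a20 eqxx.
  + have r11 : r1 = 1%N by rewrite /r1 a10 per0.
    move: c0; rewrite ec0 g2 // r11 !mulr0 mul0r addr0 mulr1 => /eqP.
    by rewrite mulf_eq0 (negbTE hE1) /= => ->; rewrite eqxx.
  + have r21 : r2 = 1%N by rewrite /r2 a20 per0.
    move: c0; rewrite ec0 g1 // r21 !mulr0 mul0r add0r mulr1 => /eqP.
    by rewrite mulf_eq0 (negbTE hE2) /= => ->; rewrite eqxx.
  + by rewrite g1 // g2 // eqxx.
Qed.


Lemma Fsum (I : finType) (f : I -> L) : (forall i, f i ^+ q = f i) -> (\sum_i f i) ^+ q = \sum_i f i.
Proof. by move=> hf; rewrite -frq rmorph_sum; apply: eq_bigr => i _; rewrite /= frq hf. Qed.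

Lemma FD (x y : L) : x ^+ q = x -> y ^+ q = y -> (x + y) ^+ q = x + y.
Proof. by move=> hx hy; rewrite -frq rmorphD /= !frq hx hy. Qed.

Lemma Trm_sum (I : finType) (f : I -> L) : Trm (\sum_i f i) = \sum_i Trm (f i).
Proof.
rewrite /Trm; under eq_bigr do rewrite rmorph_sum.
by rewrite exchange_big.
Qed.

Lemma abs_trace_sum k (I : finType) (f : I -> L) :
  abs_trace p m k (\sum_i f i) = \sum_i abs_trace p m k (f i).
Proof.
rewrite /abs_trace.
have -> : \sum_(i < m * k) (\sum_j f j) ^+ (p ^ i)%N = \sum_(i < m * k) fr i (\sum_j f j) by [].
under eq_bigr do rewrite rmorph_sum.
by rewrite exchange_big.
Qed.

Variable d : nat.

Definition Phi (a : {ffun 'I_d.+1 -> L}) : L :=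
  abs_trace p m k1 (polyOf a).[a1] *~ E1 + abs_trace p m k2 (polyOf a).[a2] *~ E2.

Lemma Phi_decomp (a : {ffun 'I_d.+1 -> L}) : (forall i, a i ^+ q = a i) -> Phi a = Trm (\sum_i a i * cc i).
Proof.
move=> ha; rewrite /Phi /polyOf !horner_poly !abs_trace_sum.
under eq_bigr => i _ do rewrite inord_val abs_trace_split //.
under [X in _ + X *~ _ = _]eq_bigr => i _ do rewrite inord_val abs_trace_split //.
rewrite Trm_sum !mulrz_suml -big_split /=.
apply: eq_bigr => i _.
by rewrite /cc mulrDr TrmD !mulrzAr !TrmMz.
Qed.


Variable psi : L -> algC.
Hypotheses (hpsi_add : forall x y : L, x ^+ p = x -> y ^+ p = y -> psi (x + y) = psi x * psi y)
  (hpsi_nz : forall x : L, x ^+ p = x -> psi x != 0)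
  (hpsi_nt : exists x : L, x ^+ p = x /\ psi x != 1).
Hypotheses (hd : (0 < d)%N) (hkd : (k1 + k2 < d)%N).

Local Notation Fd := (@Fdprime L p q d).

Lemma psi0 : psi 0 = 1.
Proof.
have h0 : (0 : L) ^+ p = 0 by rewrite expr0n eqn0Ngt (ltnW pgt1).
have := hpsi_add h0 h0; rewrite addr0 => e.
have := hpsi_nz h0 => nz.
by apply: (mulIf nz); rewrite mul1r -e.
Qed.

Definition a0 : {ffun 'I_d.+1 -> L} := [ffun i => if i == ord_max then 1 else 0].

Lemma a0_in (hpd : ~~ (p %| d)%N) : a0 \in Fd.
Proof.
rewrite inE; apply/and3P; split.
- by apply/forallP => i; rewrite ffunE; case: ifP; rewrite ?expr1n ?expr0n ?eqn0Ngt ?(ltnW qgt1).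
- by rewrite ffunE eqxx oner_eq0.
- apply/forallP => i; apply/implyP => /andP[_ pi]; rewrite ffunE.
  case: (eqVneq i ord_max) => [ei|_]; last by rewrite eqxx.
  by move: pi; rewrite ei /= (negbTE hpd).
Qed.

Lemma PhiF (a : {ffun 'I_d.+1 -> L}) : a \in Fd -> Phi a ^+ p = Phi a.
Proof.
rewrite inE => /and3P[/forallP ha _ _].
have ha' : forall i, a i ^+ q = a i by move=> i; apply/eqP.
rewrite Phi_decomp //; apply: Trm_Fp; apply: Fsum => i.
by rewrite exprMn ha' ccF.
Qed.

Lemma main_avg (hpd : ~~ (p %| d)%N) :
  @avgFd L p q d (fun a => psi (Phi a)) = if Cond then 1 else 0.
Proof.
have cardnz : (#|Fd|%:R : algC) != 0.
  by rewrite pnatr_eq0 -lt0n; apply/card_gt0P; exists a0; apply: a0_in.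
rewrite /avgFd Cond_iff; case: ifP => [/andP[/forallP hW /eqP c0]|hZ].
  have call : forall j, cc j = 0.
    apply: ZZ_all => // x xnz; apply/eqP; have := hW x; rewrite xnz.
    exact.
  rewrite (eq_bigr (fun _ => 1)) ?sumr_const ?mulVf //.
  move=> a; rewrite inE => /and3P[/forallP ha _ _].
  rewrite Phi_decomp; last by move=> i; apply/eqP.
  by rewrite big1 ?Trm0 ?psi0 // => i _; rewrite call mulr0.
have [j [jd jcc jfree]] : exists j, [/\ (j < d)%N, cc j != 0 & (j == 0%N) || ~~ (p %| j)%N].
  case: (eqVneq (cc 0) 0) => c0; last by exists 0%N; rewrite hd c0.
  move: hZ; rewrite c0 eqxx andbT => /negbT; rewrite negb_forall => /existsP[x].
  rewrite negb_imply => /andP[xnz Wnz].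
  have [j' [h1 h2 h3 h4]] := notZZ hkd (ex_intro2 _ _ x xnz Wnz).
  by exists j'; rewrite h2 h4 h3 orbT.
have jd1 : (j < d.+1)%N by apply: ltnW.
pose J := Ordinal jd1.
case: hpsi_nt => t [tp psit].
have [x [xq xt]] := Trm_onto (ccF j) jcc tp.
pose sh (y : L) (a : {ffun 'I_d.+1 -> L}) : {ffun 'I_d.+1 -> L} :=
  [ffun i => a i + (if i == J then y else 0)].
have sh_in : forall y a, y ^+ q = y -> a \in Fd -> sh y a \in Fd.
  move=> y a hy; rewrite !inE => /and3P[/forallP ha hmax /forallP hc].
  apply/and3P; split.
  - apply/forallP => i; rewrite ffunE; apply/eqP; apply: FD; first by apply/eqP.
    by case: ifP => // _; rewrite expr0n eqn0Ngt (ltnW qgt1).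
  - have : (ord_max == J) = false.
      by apply/negbTE; apply/eqP => e; move: jd; rewrite -[j]/(val J) -e /= ltnn.
    by rewrite ffunE => ->; rewrite addr0.
  - apply/forallP => i; apply/implyP => hi; rewrite ffunE.
    case: (eqVneq i J) => [ei|_]; last by rewrite addr0; apply: (implyP (hc i)).
    by move: hi jfree; rewrite ei /= => /andP[jpos pj]; rewrite pj orbF => /eqP j0; move: jpos; rewrite j0.
have shK : forall y a, sh (- y) (sh y a) = a.
  move=> y a; apply/ffunP => i; rewrite !ffunE; case: ifP => _; last by rewrite !addr0.
  by rewrite addrK.
have sh_inj : injective (sh x).
  by move=> a b e; rewrite -(shK x a) e shK.
have xnq : (- x) ^+ q = - x by rewrite -frq rmorphN /= frq xq.
have sh_eq : forall a, (sh x a \in Fd) = (a \in Fd).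
  move=> a; apply/idP/idP => h; last exact: sh_in.
  by rewrite -(shK x a); apply: sh_in.
have Phi_sh : forall a, a \in Fd -> Phi (sh x a) = Phi a + t.
  move=> a ha; have ha' : forall i, a i ^+ q = a i.
    by move: ha; rewrite inE => /and3P[/forallP h _ _] i; apply/eqP.
  have hs : forall i, sh x a i ^+ q = sh x a i.
    move: (sh_in x a xq ha); rewrite inE => /and3P[/forallP h _ _] i; apply/eqP; exact: h.
  rewrite !Phi_decomp //.
  under eq_bigr do rewrite ffunE mulrDl.
  rewrite big_split /= TrmD; congr (_ + _).
  rewrite (bigD1 J) //= eqxx big1 ?addr0 // => i /negbTE ->.
  by rewrite mul0r.
set S := \sum_(a in Fd) psi (Phi a).
have eS : S = psi t * S.
  rewrite {1}/S (shift_sum (G := fun a => psi t * psi (Phi a)) sh_inj sh_eq); last first.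
    move=> a ha.
    rewrite (Phi_sh a ha) (hpsi_add (PhiF ha) tp).
    exact: mulrC.
  by rewrite /S mulr_sumr.
have S0 : S = 0.
  apply/eqP; move: eS => /eqP; rewrite -subr_eq0 -{1}[S]mul1r -mulrBl mulf_eq0.
  by rewrite subr_eq0 eq_sym (negbTE psit).
by rewrite S0 mulr0.
Qed.

End Orbit.

Unset Implicit Arguments. Set Strict Implicit. Set Printing Implicit Defensive.

Theorem lemma7p1 (p m d N : nat) (L : finFieldType)
  (hp : prime p) (hodd : odd p) (hm : (0 < m)%N)
  (hL : #|L| = (p ^ N)%N)
  (hd : (0 < d)%N) (hpd : ~~ (p %| d)%N)
  (psi : L -> algC)
  (hpsi_add : forall x y : L, x ^+ p = x -> y ^+ p = y -> psi (x + y) = psi x * psi y)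
  (hpsi_nz : forall x : L, x ^+ p = x -> psi x != 0)
  (hpsi_nt : exists x : L, x ^+ p = x /\ psi x != 1)
  (h1 h2 e1 e2 : int)
  (hh : ~~ (p%:Z %| h1 * h2)%Z)
  (he1 : e1 = 1 \/ e1 = -1) (he2 : e2 = 1 \/ e2 = -1)
  (k1 k2 : nat) (hk1 : (0 < k1)%N) (hk2 : (0 < k2)%N) (hk : (k1 + k2 < d)%N)
  (hN1 : (m * k1 %| N)%N) (hN2 : (m * k2 %| N)%N)
  (a1 a2 : L)
  (ha1 : a1 ^+ ((p ^ m) ^ k1) = a1) (ha2 : a2 ^+ ((p ^ m) ^ k2) = a2)
  (g1 g2 : {poly L})
  (hg1 : is_minpoly_Fq (p ^ m) a1 g1) (hg2 : is_minpoly_Fq (p ^ m) a2 g2) :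
  let q := (p ^ m)%N in
  let u1 := (size g1).-1 in
  let u2 := (size g2).-1 in
  @avgFd L p q d (fun a =>
     psi (abs_trace p m k1 (polyOf a).[a1] *~ (e1 * h1)
        + abs_trace p m k2 (polyOf a).[a2] *~ (e2 * h2)))
  = if ((g1 == g2)
         && (p%:Z %| (e1 * h1 * k1%:Z + e2 * h2 * k2%:Z) %/ u1%:Z)%Z
         && ~~ (p %| (k1 * k2) %/ (u1 * u2))%N)
       || ((p %| k1 %/ u1)%N && (p %| k2 %/ u2)%N)
    then 1 else 0.
Proof.
move=> q u1 u2.
have pchp : p \in [pchar L] := card_finPcharP hL hp.
have mN : (m %| N)%N := dvdn_trans (dvdn_mulr k1 (dvdnn m)) hN1.
have N0 : (0 < N)%N.
  have := finNzRing_gt1 L; rewrite hL; case: N {hL hN1 hN2 mN} => //.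
have hn0 : (0 < N %/ m)%N by rewrite divn_gt0 // dvdn_leq.
have eQ : ((p ^ m) ^ (N %/ m))%N = (p ^ N)%N by rewrite -expnM mulnC divnK.
have hall : forall x : L, x ^+ ((p ^ m) ^ (N %/ m)) = x.
  by move=> x; rewrite eQ -hL expf_card.
have hcard : #|L| = ((p ^ m) ^ (N %/ m))%N by rewrite eQ.
have hE : forall e h : int, (e = 1 \/ e = -1) -> ~~ (p%:Z %| h)%Z -> (e * h)%:~R != 0 :> L.
  move=> e h he nh; rewrite -(dvdz_char pchp) dvdzE abszM.
  by case: he => ->; rewrite mul1n.
have nh1 : ~~ (p%:Z %| h1)%Z.
  by apply: contra hh; rewrite !dvdzE abszM; apply: dvdn_mulr.
have nh2 : ~~ (p%:Z %| h2)%Z.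
  by apply: contra hh; rewrite !dvdzE abszM; apply: dvdn_mull.
have eg1 := minpoly_Pol pchp hm hn0 hall hcard hg1.
have eg2 := minpoly_Pol pchp hm hn0 hall hcard hg2.
have eu1 : u1 = per hn0 hall a1 by rewrite /u1 eg1 size_Pol.
have eu2 : u2 = per hn0 hall a2 by rewrite /u2 eg2 size_Pol.
have egg : (g1 == g2) = (Orb hn0 hall a1 == Orb hn0 hall a2) by rewrite eg1 eg2 Pol_eq.
rewrite eu1 eu2 egg.
exact: (main_avg pchp hm hn0 hall hcard hk1 hk2 ha1 ha2 (hE _ _ he1 nh1) (hE _ _ he2 nh2)
         hpsi_add hpsi_nz hpsi_nt hd hk hpd).
Qed.
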